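(* Let $P=(Q,I,M,\Delta)$ be a broadcast protocol and consider a run of the saturation algorithm on $P$, with $S_0=I,S_1,\dots,S_m$ the values of the set $S$ after each iteration and $c_0=|I|,c_1,\dots,c_m$ the corresponding values of the counter $c$. For every $0\le i\le m$, there exist an initial configuration $\gamma_0$, a configuration $\gamma=(V,E,L)$ and a reconfigurable execution $\rho$ from $\gamma_0$ to $\gamma$ such that $L(\gamma)=S_i$, $\rho$ has exactly $c_i$ nodes, and every node has active length at most $i$ along $\rho$.
   Context: A broadcast protocol is a tuple $P=(Q,I,M,\Delta)$ where $Q$ is a finite set of states, $I\subseteq Q$ initial states, $M$ a finite message alphabet and $\Delta\subseteq Q\times\{!!m,\ ??m \mid m\in M\}\times Q$ ($!!m$ = broadcast, $??m$ = reception). Protocols are complete for receptions: for every $q$, $m$ there is $q'$ with $(q,??m,q')\in\Delta$. A configuration is a finite undirected graph $\gamma=(V,E,L)$, $E$ symmetric irreflexive, $L:V\to Q$; $L(\gamma)=L(V)$; $\gamma$ is initial if $L(V)\subseteq I$. A reconfigurable step goes from $\gamma=(V,E,L)$ to $\gamma'=(V,E',L')$ ($E'$ arbitrary) if there exist a node $v$ and $m\in M$ with $(L(v),!!m,L'(v))\in\Delta$ and for every $v'\neq v$: if $v'$ is a neighbour of $v$ in $E$ then $(L(v'),??m,L'(v'))\in\Delta$, otherwise $L'(v')=L(v')$; $v$ broadcasts in this step. A reconfigurable execution is a sequence of configurations over a fixed node set starting from an initial one with consecutive reconfigurable steps; its number of nodes is $|V|$; the active length of a node $v$ is the number of steps in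 which $v$ broadcasts. The saturation algorithm: start with $S:=I$, $c:=|I|$; repeat: if there is $(q_1,!!m,q_2)\in\Delta$ with $q_1\in S$, $q_2\notin S$, add $q_2$ to $S$ and $c:=c+1$; else if there are $(q_1,!!m,q_2),(q_1',??m,q_2')\in\Delta$ with $q_1,q_2,q_1'\in S$, $q_2'\notin S$, add $q_2'$ and $c:=c+2$; else stop and return $S$. Each iteration adds exactly one state. *)

(* Defs.v *)
From mathcomp Require Import all_boot.
Set Implicit Arguments. Unset Strict Implicit. Unset Printing Implicit Defensive.

(* Actions of a broadcast protocol: !!m (broadcast) and ??m (reception). *)
Inductive act (M : Type) := Bc of M | Rc of M.
Arguments Bc {M}. Arguments Rc {M}.

(* A broadcast protocol P = (Q, I, M, Delta) is given by finite types Q, M,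
   a set I : {set Q} and a transition relation D : Q -> act M -> Q -> bool
   ((q, a, q') \in Delta  <->  D q a q'). *)
Definition complete_receptions (Q M : Type) (D : Q -> act M -> Q -> bool) :=
  forall (q : Q) (m : M), exists q' : Q, D q (Rc m) q'.

Section Saturation.
Variables (Q M : finType) (I : {set Q}) (D : Q -> act M -> Q -> bool).

Definition rule1 (S : {set Q}) (q2 : Q) :=
  exists q1 m, [/\ D q1 (Bc m) q2, q1 \in S & q2 \notin S].

Definition rule2 (S : {set Q}) (q2' : Q) :=
  exists q1 q2 q1' m,
    [/\ D q1 (Bc m) q2, D q1' (Rc m) q2', q1 \in S, q2 \in S &
        (q1' \in S) && (q2' \notin S)].

Definition sat_iter (S : {set Q}) (c : nat) (S' : {set Q}) (c' : nat) :=
  (exists q2, [/\ rule1 S q2, S' = q2 |: S & c' = c + 1])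
  \/ ((forall q, ~ rule1 S q) /\
      exists q2', [/\ rule2 S q2', S' = q2' |: S & c' = c + 2]).

Definition sat_stop (S : {set Q}) :=
  (forall q, ~ rule1 S q) /\ (forall q, ~ rule2 S q).

Definition sat_run (m : nat) (S : nat -> {set Q}) (c : nat -> nat) :=
  [/\ S 0 = I, c 0 = #|I|,
      (forall i, i < m -> sat_iter (S i) (c i) (S i.+1) (c i.+1))
    & sat_stop (S m)].
End Saturation.

Record config (V Q : Type) := Config { edges : V -> V -> bool; lab : V -> Q }.

Section Exec.
Variables (Q M : finType) (I : {set Q}) (D : Q -> act M -> Q -> bool).
Variable V : finType.

Definition wf_config (g : config V Q) :=
  (forall u w, edges g u w = edges g w u) /\ (forall u, ~~ edges g u u).

Definition labels (g : config V Q) : {set Q} := [set lab g v | v : V].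

Definition initial (g : config V Q) := forall v, lab g v \in I.

Definition rstep (g : config V Q) (v : V) (m : M) (g' : config V Q) :=
  D (lab g v) (Bc m) (lab g' v) /\
  forall v', v' != v ->
    (edges g v v' -> D (lab g v') (Rc m) (lab g' v')) /\
    (~~ edges g v v' -> lab g' v' = lab g v').

Fixpoint valid_steps (g : config V Q) (s : seq (V * M * config V Q)) : Prop :=
  match s with
  | [::] => True
  | (v, m, g') :: s' => [/\ wf_config g', rstep g v m g' & valid_steps g' s']
  end.

Definition rexec (g0 : config V Q) (s : seq (V * M * config V Q)) :=
  [/\ wf_config g0, initial g0 & valid_steps g0 s].

Definition final_config (g0 : config V Q) (s : seq (V * M * config V Q)) :=
  last g0 [seq x.2 | x <- s].

Definition active_length (s : seq (V * M * config V Q)) (v : V) :=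
  count (fun x => x.1.1 == v) s.
End Exec.

(* Main.v *)
Require Import Defs.
From mathcomp Require Import all_boot.
Set Implicit Arguments. Unset Strict Implicit. Unset Printing Implicit Defensive.

Section Helpers.
Variables (Q M : finType) (I : {set Q}) (D : Q -> act M -> Q -> bool).

Section Clone.
Variables (V : finType) (u : V).

Definition liftc (g : config V Q) : config (option V) Q :=
  Config (fun x y => match x, y with
                     | Some a, Some b => edges g a b
                     | Some a, None => edges g a u
                     | None, Some b => edges g u b
                     | None, None => false end)
         (fun x => match x with Some a => lab g a | None => lab g u end).

Definition midc (g g' : config V Q) : config (option V) Q :=
  Config (fun _ _ => false)
         (fun x => match x with Some a => lab g' a | None => lab g u end).

Fixpoint clone_steps (g : config V Q) (s : seq (V * M * config V Q))
  : seq (option V * M * config (option V) Q) :=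
  match s with
  | [::] => [::]
  | (v, m, g') :: t =>
    if v == u then (Some u, m, midc g g') :: (None, m, liftc g') :: clone_steps g' t
    else (Some v, m, liftc g') :: clone_steps g' t
  end.

Lemma wf_liftc g : wf_config g -> wf_config (liftc g).
Proof.
move=> [Hs Hi]; split.
  by case=> [a|] [b|] //=.
by case=> [a|] //=.
Qed.

Lemma valid_clone g s : wf_config g -> valid_steps D g s ->
  valid_steps D (liftc g) (clone_steps g s).
Proof.
elim: s g => [//|[[v m] g'] t IH] g Hwf /= [Hwf' [Hb Hr] Hv].
have Hu : ~~ edges g u u by case: Hwf.
case: eqP => [Evu|/eqP Nvu].
  subst v; split.
  - by split => //=; case.
  - split => //= [[a|]] /= Ha.
      by apply: Hr; apply: contraNneq Ha => ->.
    by rewrite (negbTE Hu); split.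
  split; first exact: wf_liftc.
    by split => //= [[a|]] //= _; split.
  by apply: IH.
split; first exact: wf_liftc.
  split => //= [[a|]] /= Ha.
    by apply: Hr; apply: contraNneq Ha => ->.
  by apply: Hr; rewrite eq_sym.
by apply: IH.
Qed.

Lemma final_clone g s :
  final_config (liftc g) (clone_steps g s) = liftc (final_config g s).
Proof.
elim: s g => [//|[[v m] g'] t IH] g /=.
by case: eqP => _ /=; apply: IH.
Qed.

Lemma act_clone_some g s a :
  active_length (clone_steps g s) (Some a) = active_length s a.
Proof.
elim: s g => [//|[[v m] g'] t IH] g /=.
have [->|N] := eqVneq v u.
  by rewrite /active_length /= -/(active_length _ _) IH.
by rewrite /active_length /= -/(active_length _ _) IH.
Qed.

Lemma act_clone_none g s :
  active_length (clone_steps g s) None = active_length s u.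
Proof.
elim: s g => [//|[[v m] g'] t IH] g /=.
have [_|N] := eqVneq v u.
  by rewrite /active_length /= -/(active_length _ _) IH.
by rewrite /active_length /= -/(active_length _ _) IH.
Qed.

End Clone.

Lemma clone_exec (V : finType) (g0 : config V Q) s (u : V) :
  rexec I D g0 s ->
  exists (g0' : config (option V) Q) s',
    [/\ rexec I D g0' s',
        (forall x, lab (final_config g0' s') (Some x) = lab (final_config g0 s) x),
        lab (final_config g0' s') None = lab (final_config g0 s) u,
        (forall x, active_length s' (Some x) = active_length s x)
      & active_length s' None = active_length s u].
Proof.
move=> [Hwf Hin Hv].
exists (liftc u g0), (clone_steps u g0 s); rewrite final_clone; split => //.
- split; [exact: wf_liftc | by case=> [a|] /=; apply: Hin | exact: valid_clone].
- by move=> x; apply: act_clone_some.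
- by apply: act_clone_none.
Qed.

Lemma reset_steps (V : finType) (g : config V Q) s (E : V -> V -> bool) :
  (forall x y, E x y = E y x) -> (forall x, ~~ E x x) ->
  valid_steps D g s -> 0 < size s ->
  exists s', [/\ valid_steps D g s',
     final_config g s' = Config E (lab (final_config g s))
   & forall w, active_length s' w = active_length s w].
Proof.
move=> Es Ei.
elim: s g => [//|[[v m] g'] t IH] g /= [Hwf [Hb Hr] Hv] _.
case: t IH Hv => [|x t] IH Hv.
  exists [:: (v, m, Config E (lab g'))]; split => //=.
have [t' [Hv' Hf Ha]] := IH g' Hv isT.
exists ((v, m, g') :: t'); split => //.
move=> w; rewrite /active_length /= -!/(active_length _ _) Ha //.
Qed.

Lemma reset_exec (V : finType) (g0 : config V Q) s (E : V -> V -> bool) :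
  (forall x y, E x y = E y x) -> (forall x, ~~ E x x) ->
  rexec I D g0 s ->
  exists (g0' : config V Q) s',
    [/\ rexec I D g0' s',
        final_config g0' s' = Config E (lab (final_config g0 s))
      & forall w, active_length s' w = active_length s w].
Proof.
move=> Es Ei [Hwf Hin Hv].
case: s Hv => [|x t] Hv.
  by exists (Config E (lab g0)), [::].
have [s' [Hv' Hf Ha]] := reset_steps Es Ei Hv isT.
by exists g0, s'.
Qed.

Lemma valid_rcons (V : finType) (g : config V Q) s v m g' :
  valid_steps D g s -> wf_config g' -> rstep D (final_config g s) v m g' ->
  valid_steps D g (rcons s (v, m, g')).
Proof.
elim: s g => [|[[w m'] h] t IH] g /=; first by [].
by move=> [H1 H2 H3] Hw Hr; split => //; apply: IH.
Qed.

Lemma append_exec (V : finType) (g0 : config V Q) s v m g' :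
  rexec I D g0 s -> wf_config g' -> rstep D (final_config g0 s) v m g' ->
  [/\ rexec I D g0 (rcons s (v, m, g')),
      final_config g0 (rcons s (v, m, g')) = g'
    & forall w, active_length (rcons s (v, m, g')) w = active_length s w + (v == w)].
Proof.
move=> [Hwf Hin Hv] Hw Hr; split.
- by split => //; apply: valid_rcons.
- by rewrite /final_config map_rcons last_rcons.
- by move=> w; rewrite /active_length -cats1 count_cat /= addn0.
Qed.

Lemma labels_opt (V : finType) (g : config V Q) (G : config (option V) Q) :
  (forall x, lab G (Some x) = lab g x) -> labels G = lab G None |: labels g.
Proof.
move=> H; apply/setP => q; rewrite in_setU1.
apply/imsetP/idP.
  case=> [[x|] _ ->]; apply/orP; [right; apply/imsetP; exists x => // | by left].
case/orP => [/eqP->| /imsetP [x _ ->]]; [by exists None | by exists (Some x)].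
Qed.

End Helpers.

Theorem lemma3p3 (Q M : finType) (I : {set Q}) (D : Q -> act M -> Q -> bool)
  (Hcomp : complete_receptions D)
  (m : nat) (S : nat -> {set Q}) (c : nat -> nat)
  (Hrun : sat_run I D m S c) :
  forall i, i <= m ->
    exists (V : finType) (g0 : config V Q) (s : seq (V * M * config V Q)),
      [/\ rexec I D g0 s,
          labels (final_config g0 s) = S i,
          #|V| = c i
        & forall v : V, active_length s v <= i].
Proof.
case: Hrun => [HS0 Hc0 Hit Hstop].
elim=> [_|i IHi Hi].
  exists {q : Q | q \in I}.
  exists (Config (fun _ _ => false) (fun x : {q : Q | q \in I} => val x)), [::].
  split => //.
  - split => /=; [by split | by case | by []].
  - rewrite HS0; apply/setP => q; apply/imsetP/idP.
      by case=> x _ ->; exact: valP.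
    by move=> Hq; exists (exist _ q Hq).
  - by rewrite card_sig Hc0.
have [V [g0 [s [Hex Hl Hc Ha]]]] := IHi (ltnW Hi).
case: (Hit i Hi) =>
  [[q2 [[q1 [mm [Hb Hq1 _]]] -> ->]]
  |[_ [q2' [[q1 [q2 [q1' [mm [Hb Hr Hq1 Hq2 /andP [Hq1' _]]]]]] -> ->]]]].
- have : q1 \in labels (final_config g0 s) by rewrite Hl.
  case/imsetP => u _ Hu.
  have [g1 [s1 [Hex1 HlS HlN HaS HaN]]] := clone_exec u Hex.
  have [g2 [s2 [Hex2 Hf2 Ha2]]] :=
    reset_exec (E := fun _ _ => false) (fun _ _ => erefl) (fun _ => isT) Hex1.
  pose G := Config (fun _ _ : option V => false)
     (fun x => if x is Some y then lab (final_config g0 s) y else q2).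
  have HwG : wf_config G by split.
  have Hst : rstep D (final_config g2 s2) None mm G.
    rewrite Hf2; split => /=; first by rewrite HlN -Hu.
    by case=> [y|] // _; split => // _; rewrite HlS.
  have [Hex3 Hf3 Ha3] := append_exec Hex2 HwG Hst.
  exists (option V), g2, (rcons s2 (None, mm, G)); split => //.
  + by rewrite Hf3 (labels_opt (g := final_config g0 s)) //= Hl.
  + by rewrite card_option Hc addn1.
  + case=> [y|]; rewrite Ha3 Ha2 ?HaS ?HaN /=.
      by rewrite addn0 (leq_trans (Ha y)).
    by rewrite addn1 ltnS.
- have : q1 \in labels (final_config g0 s) by rewrite Hl.
  case/imsetP => a _ Ea.
  have : q1' \in labels (final_config g0 s) by rewrite Hl.
  case/imsetP => b _ Eb.
  have [g1 [s1 [Hex1 HlS HlN HaS HaN]]] := clone_exec a Hex.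
  have [g1' [s1' [Hex1' HlS' HlN' HaS' HaN']]] := clone_exec (Some b) Hex1.
  pose E := fun x y : option (option V) =>
    ((x == Some None) && (y == None)) || ((x == None) && (y == Some None)).
  have Es : forall x y, E x y = E y x by case=> [[x|]|] [[y|]|].
  have Ei : forall x, ~~ E x x by case=> [[x|]|].
  have [g2 [s2 [Hex2 Hf2 Ha2]]] := reset_exec Es Ei Hex1'.
  pose G := Config (fun _ _ : option (option V) => false)
     (fun x => match x with None => q2' | Some None => q2
               | Some (Some y) => lab (final_config g0 s) y end).
  have HwG : wf_config G by split.
  have Hst : rstep D (final_config g2 s2) (Some None) mm G.
    rewrite Hf2; split => /=; first by rewrite HlS' HlN -Ea.
    case=> [[y|]|] //= _; split => //.
      by move=> _; rewrite HlS' HlS.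
    by move=> _; rewrite HlN' HlS -Eb.
  have [Hex3 Hf3 Ha3] := append_exec Hex2 HwG Hst.
  exists (option (option V)), g2, (rcons s2 (Some None, mm, G)); split => //.
  + pose G1 := Config (fun _ _ : option V => false) (fun x => lab G (Some x)).
    rewrite Hf3 (labels_opt (g := G1)) // (labels_opt (g := final_config g0 s)) //= Hl.
    apply/setP => q; rewrite !in_setU1.
    by have [->|_] := eqVneq q q2; rewrite ?Hq2 ?orbT.
  + by rewrite !card_option Hc addn2.
  + case=> [[y|]|]; rewrite Ha3 Ha2 /=.
    * by rewrite HaS' HaS addn0 (leq_trans (Ha y)).
    * by rewrite HaS' HaN addn1 ltnS.
    * by rewrite HaN' HaS addn0 (leq_trans (Ha b)).
Qed.
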